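(* Let $G$ be a finite nonabelian group and suppose $Z_2=Z(G)$, where $Z_2/Z(G)=Z(G/Z(G))$. Then: (1) $K(G)$ is the intersection of all noncentral normal subgroups of $G$ (i.e. normal subgroups not contained in $Z(G)$); (2) $K(G)\not\le Z(G)$ if and only if $G$ has a unique subgroup $N$ that is minimal among the noncentral normal subgroups of $G$.
   Context: All groups are finite. For $\chi\in\mathrm{Irr}(G)$, the center of $\chi$ is $Z(\chi)=\{g\in G : |\chi(g)|=\chi(1)\}$; equivalently $Z(\chi)/\ker(\chi)=Z(G/\ker(\chi))$. For a nonabelian group $G$, let $\mathcal{X}=\{\chi\in\mathrm{Irr}(G) : Z(\chi)>Z(G)\}$ (strict containment) and define $K(G)=\bigcap_{\chi\in\mathcal{X}}\ker(\chi)$. If $G$ is abelian, set $K(G)=G$. *)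

(* Defs.v *)
From mathcomp Require Import all_boot all_order all_algebra all_fingroup all_solvable all_field all_character.
Set Implicit Arguments. Unset Strict Implicit. Unset Printing Implicit Defensive.
Import GroupScope.
Local Open Scope group_scope.

(* X = irreducible characters chi with Z(G) < Z(chi) (strict containment);
   K(G) = intersection of their kernels (= G if abelian; intersection taken
   inside G so that the empty intersection is G). *)
Definition Kgrp (gT : finGroupType) (G : {group gT}) : {set gT} :=
  if abelian G then G
  else G :&: \bigcap_(i : Iirr G | 'Z(G) \proper ('Z(('chi[G]_i)%R))%CF) cfker ('chi[G]_i)%R.

Definition noncentral_normal (gT : finGroupType) (G N : {group gT}) : bool :=
  (N <| G) && ~~ (N \subset 'Z(G)).

Definition min_noncentral_normal (gT : finGroupType) (G N : {group gT}) : Prop :=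
  noncentral_normal G N /\
  forall M : {group gT}, noncentral_normal G M -> M \subset N -> M :=: N.

(* Main.v *)
Require Import Defs.
From mathcomp Require Import all_boot all_order all_algebra all_fingroup all_solvable all_field all_character.
Import GroupScope.
Local Open Scope group_scope.

Lemma lemA (gT : finGroupType) (G : {group gT}) (i : Iirr G) :
  'Z_2(G) = 'Z(G) -> 'Z(G) \proper ('Z(('chi[G]_i)%R))%CF ->
  noncentral_normal G [group of cfker ('chi[G]_i)%R].
Proof.
move=> Z2 prZ; rewrite /noncentral_normal cfker_normal /=.
apply/negP => kZ.
have [sZ /subsetPn [x xZc xnZ]] := andP prZ.
move/negP: xnZ; apply; rewrite -Z2 ucnSnR ucn1 inE.
have Gx : x \in G := subsetP (cfcenter_sub _) x xZc.
rewrite Gx /=; apply: subset_trans kZ.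
have nK := normal_norm (cfker_normal ('chi[G]_i)%R).
apply: subset_trans (commSg _ _) _; first by rewrite sub1set; exact: xZc.
rewrite -quotient_cents2 ?(subset_trans (cfcenter_sub _)) //.
apply: subset_trans (cfcenter_subset_center _) _.
exact: subsetIr.
Qed.

Lemma lemB (gT : finGroupType) (G N : {group gT}) (i : Iirr G) :
  noncentral_normal G N -> N \subset cfker ('chi[G]_i)%R ->
  'Z(G) \proper ('Z(('chi[G]_i)%R))%CF.
Proof.
case/andP=> _ nZ sN; rewrite properE.
rewrite -cap_cfcenter_irr (bigcap_inf i) //= cap_cfcenter_irr.
apply/negP=> sZ; apply/negP: nZ; apply/negPn.
apply: subset_trans sN (subset_trans (normal_sub (cfker_center_normal _)) sZ).
Qed.

Theorem theoremB (gT : finGroupType) (G : {group gT}) :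
  ~~ abelian G -> 'Z_2(G) = 'Z(G) ->
  (Kgrp G = G :&: \bigcap_(N : {group gT} | noncentral_normal G N) N) /\
  (~~ (Kgrp G \subset 'Z(G)) <->
     exists! N : {group gT}, min_noncentral_normal G N).
Proof.
move=> nab Z2.
have E : Kgrp G = G :&: \bigcap_(N : {group gT} | noncentral_normal G N) N.
  rewrite /Kgrp (negbTE nab); apply/eqP; rewrite eqEsubset !subsetI !subsetIl /=.
  apply/andP; split.
    apply/bigcapsP=> N nN; have nsN := andP nN; case: nsN => nsN _.
    rewrite -(cap_cfker_normal nsN); apply/bigcapsP=> i Ni.
    apply: subset_trans (subsetIr _ _) _.
    by apply: bigcap_inf; exact: lemB Ni.
  apply/bigcapsP=> i Pi; apply: subset_trans (subsetIr _ _) _.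
  by apply: (bigcap_inf [group of cfker ('chi[G]_i)%R]); exact: lemA Z2 Pi.
split=> //.
set S := \bigcap_(N : {group gT} | noncentral_normal G N) gval N in E.
have KN : forall N : {group gT}, noncentral_normal G N -> G :&: S \subset N.
  move=> N nN; apply: subset_trans (subsetIr _ _) _; exact: bigcap_inf.
rewrite E; split.
  move=> nKZ.
  have nsK : noncentral_normal G [group of G :&: S].
    apply/andP; split=> //; rewrite /normal subsetIl /=.
    apply: normsI; first exact: normG.
    apply: norms_bigcap; apply/bigcapsP=> N /andP[/andP[_ ?] _] //.
  exists [group of G :&: S]; split.
    split=> // M nM sM; apply/eqP; rewrite eqEsubset sM; exact: KN.
  move=> N [nN minN]; apply: group_inj; apply: minN => //; exact: KN.
case=> N0 [[nN0 minN0] uniq]; apply/negP => KZ.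
have sN0 : forall N : {group gT}, noncentral_normal G N -> N0 \subset N.
  move=> N nN.
  have [H /mingroupP [/andP [nH sHN] minH] _] :=
    @mingroup_exists gT (fun M => noncentral_normal G M && (M \subset N)) N
      (introT andP (conj nN (subxx _))).
  suff -> : N0 = H by [].
  apply: uniq; split=> // M nM sMH; apply: minH => //.
  by rewrite nM (subset_trans sMH sHN).
case/andP: nN0 => nsN0 /negP; apply; apply: subset_trans KZ.
rewrite subsetI (normal_sub nsN0); apply/bigcapsP=> N nN; exact: sN0.
Qed.
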